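(* Let $p$ be a prime, let $G$ be a countably based pro-$p$ group and let $g\in G$ be an element of order $p^k$. Then $$\dim_{\mathbb{F}_p[[G]]}\ \mathbb{F}_p[[G]]/\mathbb{F}_p[[G]](g-1)=\frac{1}{p^k}.$$
   Context: For an open normal subgroup $U$ of $G$ and a finitely presented left $\mathbb{F}_p[[G]]$-module $M$, $\dim_{\mathbb{F}_p[G/U]}M=\frac{\dim_{\mathbb{F}_p}(\mathbb{F}_p[G/U]\otimes_{\mathbb{F}_p[[G]]}M)}{|G:U|}$, and $\dim_{\mathbb{F}_p[[G]]}M=\inf_U \dim_{\mathbb{F}_p[G/U]}M$, the infimum over all open normal subgroups $U$ of $G$. *)

(* Defs.v *)
From HB Require Import structures.
From mathcomp Require Import all_boot all_order all_algebra all_fingroup.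
From mathcomp Require Import all_classical all_reals.
From mathcomp Require Import topology.
Set Implicit Arguments. Unset Strict Implicit. Unset Printing Implicit Defensive.
Import Order.TTheory GRing.Theory Num.Theory.
Local Open Scope classical_set_scope.
Local Open Scope ring_scope.

Record profinite_group := ProfiniteGroup {
  pg_car :> topologicalType;
  pg_mul : pg_car -> pg_car -> pg_car;
  pg_inv : pg_car -> pg_car;
  pg_one : pg_car;
  pg_mulA : forall x y z, pg_mul x (pg_mul y z) = pg_mul (pg_mul x y) z;
  pg_mul1g : forall x, pg_mul pg_one x = x;
  pg_mulVg : forall x, pg_mul (pg_inv x) x = pg_one;
  pg_mul_cont : continuous (fun xy : pg_car * pg_car => pg_mul xy.1 xy.2);
  pg_inv_cont : continuous pg_inv;
  pg_compact : compact [set: pg_car];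
  pg_hausdorff : hausdorff_space pg_car;
  pg_tdisc : totally_disconnected [set: pg_car]
}.

Section ProfiniteDefs.
Variable G : profinite_group.

Definition pg_exp (x : G) (n : nat) : G := iter n (pg_mul x) (pg_one G).

Definition pg_order_is (x : G) (m : nat) : Prop :=
  (0 < m)%N /\ pg_exp x m = pg_one G /\
  forall n, (0 < n < m)%N -> pg_exp x n <> pg_one G.

Definition open_normal_subgroup (U : set G) : Prop :=
  [/\ open U, U (pg_one G),
      (forall x y, U x -> U y -> U (pg_mul x y)),
      (forall x, U x -> U (pg_inv x)) &
      (forall x u, U u -> U (pg_mul (pg_mul x u) (pg_inv x)))].

Definition quotient_map (U : set G) (Q : finGroupType) (pi : G -> Q) : Prop :=
  [/\ forall x y, pi (pg_mul x y) = (pi x * pi y)%g,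
      forall q : Q, exists x, pi x = q &
      forall x, pi x = 1%g <-> U x].

Definition pro_p (p : nat) : Prop :=
  forall U, open_normal_subgroup U ->
  forall (Q : finGroupType) (pi : G -> Q), quotient_map U pi -> p.-nat #|Q|.

Definition countably_based : Prop := second_countable (T := G).

End ProfiniteDefs.

(* The matrix, in the basis Q of F_p[Q], of right multiplication by (h - 1):
   row x is the coordinate vector of x*(h-1) = xh - x.  Its row space is the
   left ideal F_p[Q](h-1). *)
Definition rmul_hm1_mx (p : nat) (Q : finGroupType) (h : Q) : 'M['F_p]_#|Q| :=
  \matrix_(i, j) (((enum_val j == (enum_val i * h)%g) : nat)%:R
                   - ((i == j) : nat)%:R).

Definition dim_quot_ideal (p : nat) (Q : finGroupType) (h : Q) : nat :=
  (#|Q| - \rank (rmul_hm1_mx p h))%N.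

(* r = dim_{F_p[G/U]} (F_p[[G]]/F_p[[G]](g-1))
     = dim_{F_p}(F_p[G/U] (x)_{F_p[[G]]} F_p[[G]]/F_p[[G]](g-1)) / |G:U|,
   where F_p[G/U] (x) F_p[[G]]/F_p[[G]](g-1) = F_p[G/U]/F_p[G/U](gU-1),
   computed via a realisation Q of G/U. *)
Definition dim_mod_U (R : realType) (p : nat) (G : profinite_group) (g : G)
    (U : set G) (r : R) : Prop :=
  exists (Q : finGroupType) (pi : G -> Q),
    quotient_map U pi /\
    r = ((dim_quot_ideal p (pi g))%:R / (#|Q|)%:R)%R.

(* dim_{F_p[[G]]} (F_p[[G]]/F_p[[G]](g-1)) = inf over open normal U *)
Definition dim_completed (R : realType) (p : nat) (G : profinite_group) (g : G) : R :=
  inf [set r : R | exists U : set G, open_normal_subgroup U /\ dim_mod_U p g U r].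

(* Main.v *)
Require Import Defs.
From HB Require Import structures.
From mathcomp Require Import all_boot all_order all_algebra all_fingroup.
From mathcomp Require Import all_classical all_reals topology.
Import GRing.Theory Num.Theory.
From mathcomp Require Import cyclic.

Module Aux.
Set Implicit Arguments. Unset Strict Implicit. Unset Printing Implicit Defensive.
Local Open Scope classical_set_scope.
Lemma qc_nbhs (T : topologicalType) (x : T) (W : set T) :
  compact [set: T] -> open W ->
  (forall y, ~ W y -> exists C : set T, [/\ clopen C, C x & ~ C y]) ->
  exists C : set T, [/\ clopen C, C x & C `<=` W].
Proof.
pose F := filter_from [set D : set T | D x /\ clopen D] id.
have FF : Filter F.
  apply: filter_from_filter; first by exists setT; split => //; exact: clopenT.
  by move=> A B [? ?] [? ?]; exists (A `&` B) => //; split=> //; exact: clopenI.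
have PF : ProperFilter F by apply: filter_from_proper; move=> ? [? _]; exists x.
move=> cmpT oU zdT.
suff [D [Dx cD] DW] : F W by exists D.
have /(iffLR (compact_near_coveringP _)) : compact (~` W).
  by apply: (subclosed_compact _ cmpT) => //; exact: open_closedC.
move=> /(_ _ _ setC (powerset_filter_from_filter PF))[].
  move=> y nUy; have [C [[oC cC] Cx Cy]] := zdT y nUy.
  exists (~` C, [set U | U `<=` C]); first split.
  - by apply: open_nbhs_nbhs; split => //; exact: closed_openC.
  - apply/near_powerset_filter_fromP; first by move=> ? ?; exact: subset_trans.
    by exists C => //; exists C.
  - by case=> i j [? /subsetC]; apply.
by move=> D [DF _ [C DC]]/(_ _ DC)/subsetC2/filterS; apply; exact: DF.
Qed.
Lemma sep_closed (T : topologicalType) (A B : set T) :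
  hausdorff_space T -> compact [set: T] -> closed A -> closed B -> A `&` B = set0 ->
  exists U V : set T, [/\ open U, open V, A `<=` U, B `<=` V & U `&` V = set0].
Proof.
move=> hT cT cA cB AB.
have /(_ (~` B)) := compact_normal hT cT cA.
case.
  move=> a Aa; apply: open_nbhs_nbhs; split; first exact: closed_openC.
  by move=> Ba; have : (A `&` B) a by []; rewrite AB.
move=> D DA clD.
exists (interior D), (~` closure D); split.
- exact: open_interior.
- exact/closed_openC/closed_closure.
- by move=> a Aa; exact: DA.
- by move=> b Bb /clD.
- apply/seteqP; split => // z [/interior_subset Dz]; apply; exact: subset_closure.
Qed.
Lemma zero_dim (T : topologicalType) (x y : T) :
  hausdorff_space T -> compact [set: T] -> totally_disconnected [set: T] ->
  x <> y -> exists C : set T, [/\ clopen C, C x & ~ C y].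
Proof.
move=> hT cT tdT xy.
pose Q := \bigcap_(C in [set C : set T | clopen C /\ C x]) C.
have Qx : Q x by move=> C [].
have cQ : closed Q by apply: closed_bigI => C [[]].
suff conQ : connected Q.
  have : Q `<=` connected_component [set: T] x.
    by apply: connected_component_max.
  rewrite tdT // => /(_ y) Qy.
  apply: contrapT => nC; apply: xy; apply/esym/Qy => C [cC Cx].
  by apply: contrapT => nCy; apply: nC; exists C.
move=> B [b Bb] [O oO BQO] [K cK BQK].
pose A := Q `&` ~` O.
have cA : closed A by apply: closedI => //; exact: open_closedC.
have cB : closed B by rewrite BQK; exact: closedI.
have AB : A `&` B = set0.
  by apply/seteqP; split => // z [[_ nO]]; rewrite BQO => -[].
have [U [V [oU oV AU BV UV]]] := sep_closed hT cT cA cB AB.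
have QUV : Q `<=` U `|` V.
  move=> z Qz; have [Oz|nOz] := pselect (O z).
    by right; apply: BV; rewrite BQO.
  by left; apply: AU.
have [C [[oC clC] Cx CW]] : exists C : set T, [/\ clopen C, C x & C `<=` U `|` V].
  apply: qc_nbhs => //; first exact: openU.
  move=> z nW; apply: contrapT => nex; apply: nW; apply: QUV => D [cD Dx].
  by apply: contrapT => nDz; apply: nex; exists D.
have disj z : U z -> V z -> False.
  by move=> Uz Vz; have : (U `&` V) z by []; rewrite UV.
have [Bx|nBx] := pselect (B x).
  have Vx : V x by apply: BV.
  have clCV : clopen (C `&` V).
    split; first exact: openI.
    have -> : C `&` V = C `&` ~` U.
      apply/seteqP; split => z [Cz Wz]; split => //.
        by move=> Uz; exact: disj Uz Wz.
      by case: (CW z Cz).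
    by apply: closedI => //; exact: open_closedC.
  apply/seteqP; split; first by rewrite BQO => z [].
  move=> z Qz; apply: contrapT => nBz.
  have Az : A z by split => //; move=> Oz; apply: nBz; rewrite BQO.
  by apply: (disj z (AU z Az)); have [] := Qz _ (conj clCV (conj Cx Vx)).
exfalso.
have Ax : A x by split => //; move=> Ox; apply: nBx; rewrite BQO.
have Ux : U x by apply: AU.
have clCU : clopen (C `&` U).
  split; first exact: openI.
  have -> : C `&` U = C `&` ~` V.
    apply/seteqP; split => z [Cz Wz]; split => //.
      by move=> Vz; exact: disj Wz Vz.
    by case: (CW z Cz).
  by apply: closedI => //; exact: open_closedC.
have Qb : Q b by move: Bb; rewrite BQO => -[].
have [_ Ub] := Qb _ (conj clCU (conj Cx Ux)).
exact: disj b Ub (BV b Bb).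
Qed.
Section Grp.
Variable G : profinite_group.
Local Notation m := (@pg_mul G).
Local Notation iv := (@pg_inv G).
Local Notation e := (@pg_one G).

Lemma mulA (x y z : G) : m x (m y z) = m (m x y) z. Proof. exact: pg_mulA. Qed.
Lemma mul1 (x : G) : m e x = x. Proof. exact: pg_mul1g. Qed.
Lemma mulV (x : G) : m (iv x) x = e. Proof. exact: pg_mulVg. Qed.
Lemma mulKg (x y : G) : m (iv x) (m x y) = y.
Proof. by rewrite mulA mulV mul1. Qed.
Lemma mulgV (x : G) : m x (iv x) = e.
Proof.
transitivity (m (m (iv (iv x)) (iv x)) (m x (iv x))); first by rewrite mulV mul1.
by rewrite -mulA (mulA (iv x)) mulV mul1 mulV.
Qed.
Lemma mul1r (x : G) : m x e = x.
Proof. by rewrite -(mulV x) mulA mulgV mul1. Qed.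
Lemma invK (x : G) : iv (iv x) = x.
Proof. by rewrite -[iv (iv x)]mul1r -(mulV x) mulA mulV mul1. Qed.
Lemma mulVK (a x : G) : m (m a (iv x)) x = a.
Proof. by rewrite -mulA mulV mul1r. Qed.
Lemma mulKV (a x : G) : m (m a x) (iv x) = a.
Proof. by rewrite -mulA mulgV mul1r. Qed.
Lemma inv1 : iv e = e.
Proof. by rewrite -[iv e]mul1r mulV. Qed.
Lemma mulI (a x y : G) : m a x = m a y -> x = y.
Proof. by move=> h; rewrite -(mulKg a x) h mulKg. Qed.
Lemma invM (x y : G) : iv (m x y) = m (iv y) (iv x).
Proof.
apply: (@mulI (m x y)); rewrite mulgV !mulA mulKV mulgV //.
Qed.

Lemma cont_mul (A : topologicalType) (f g : A -> G) :
  continuous f -> continuous g -> continuous (fun a => m (f a) (g a)).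
Proof.
move=> cf cg a.
apply: (continuous_comp (f := fun a => (f a, g a)) (g := fun xy : G * G => m xy.1 xy.2)).
  by apply: cvg_pair; [exact: cf | exact: cg].
exact: pg_mul_cont.
Qed.

Lemma cont_inv (A : topologicalType) (f : A -> G) :
  continuous f -> continuous (fun a => iv (f a)).
Proof.
move=> cf a; apply: (continuous_comp (f := f) (g := iv)) ; [exact: cf | exact: (@pg_inv_cont G (f a))].
Qed.

Variable V : set G.
Definition Ucore : set G :=
  [set u | forall x y : G, V (m y (m (m x u) (iv x))) <-> V y].

Lemma Ucore1 : Ucore e.
Proof. by move=> x y; rewrite mul1r mulgV mul1r. Qed.

Lemma UcoreM u v : Ucore u -> Ucore v -> Ucore (m u v).
Proof.
move=> hu hv x y.
have -> : m y (m (m x (m u v)) (iv x)) =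
   m (m y (m (m x u) (iv x))) (m (m x v) (iv x)).
  by rewrite !mulA mulVK.
by rewrite hv hu.
Qed.

Lemma UcoreV u : Ucore u -> Ucore (iv u).
Proof.
move=> hu x y.
set y' := m y (m (m x (iv u)) (iv x)).
have <- : m y' (m (m x u) (iv x)) = y.
  by rewrite /y' !mulA mulVK mulVK mulKV.
by rewrite hu.
Qed.

Lemma UcoreJ z u : Ucore u -> Ucore (m (m z u) (iv z)).
Proof.
move=> hu x y.
have -> : m y (m (m x (m (m z u) (iv z))) (iv x)) =
   m y (m (m (m x z) u) (iv (m x z))).
  by rewrite invM !mulA.
exact: (hu (m x z) y).
Qed.

Lemma Ucore_sub u : Ucore u -> V u <-> V e.
Proof. by move=> hu; have := hu e e; rewrite inv1 !mul1 mul1r. Qed.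

Lemma cont_fst (A B : topologicalType) : continuous (fun z : A * B => z.1).
Proof. by move=> z; apply: cvg_fst. Qed.
Lemma cont_snd (A B : topologicalType) : continuous (fun z : A * B => z.2).
Proof. by move=> z; apply: cvg_snd. Qed.

Lemma Ucore_nbhs : clopen V -> nbhs e Ucore.
Proof.
move=> [oV cV].
have cT : compact [set: G * G] by rewrite -setXTT; apply: compact_setX; exact: pg_compact.
have := (compact_near_coveringP _).1 cT G (nbhs e)
  (fun u (xy : G * G) => V (m xy.2 (m (m xy.1 u) (iv xy.1))) <-> V xy.2).
move=> /(_ _) H; have {}H := H _.
apply: filterS (H _).
  by move=> u /= Hu x y; exact: (Hu (x, y) I).
move=> [x y] _.
pose O := [set w | V w <-> V y].
have oO : open O.
  have [Vy|nVy] := pselect (V y).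
    have -> : O = V by apply/seteqP; split => w /=; rewrite /O /=; tauto.
    done.
  have -> : O = ~` V by apply/seteqP; split => w /=; rewrite /O /=; tauto.
  exact: closed_openC.
pose F (z : (G * G) * G) := m z.1.2 (m (m z.1.1 z.2) (iv z.1.1)).
have cF : continuous F.
  apply: cont_mul.
    by move=> z; apply: (continuous_comp (f := fun z : (G * G) * G => z.1) (g := fun w : G * G => w.2)); [exact: cont_fst | exact: cont_snd].
  apply: cont_mul; last apply: cont_inv.
    apply: cont_mul; last exact: cont_snd.
    by move=> z; apply: (continuous_comp (f := fun z : (G * G) * G => z.1) (g := fun w : G * G => w.1)); [exact: cont_fst | exact: cont_fst].
  by move=> z; apply: (continuous_comp (f := fun z : (G * G) * G => z.1) (g := fun w : G * G => w.1)); [exact: cont_fst | exact: cont_fst].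
have Fy : F ((x, y), e) = y by rewrite /F /= mul1r mulgV mul1r.
have N1 : nbhs ((x, y), e) (F @^-1` O).
  apply: cF; rewrite Fy; apply: open_nbhs_nbhs; split => //.
have N2 : nbhs ((x, y), e) ((fun z : (G * G) * G => z.1.2) @^-1` O).
  have c2 : continuous (fun z : (G * G) * G => z.1.2).
    by move=> z; apply: (continuous_comp (f := fun z : (G * G) * G => z.1) (g := fun w : G * G => w.2)); [exact: cont_fst | exact: cont_snd].
  by apply: c2; apply: open_nbhs_nbhs; split => //.
have N : nbhs ((x, y), e) (F @^-1` O `&` (fun z : G * G * G => z.1.2) @^-1` O) by apply: filterI.
have FI : Filter (filter_prod (nbhs (x, y)) (nbhs (nbhs e))) by apply: filter_prod_filter.
apply: filterS N => -[[x' y'] u] [/= h1 h2].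
rewrite /O /= in h1 h2; rewrite /F /= in h1; tauto.
Qed.

Lemma Ucore_open : clopen V -> open Ucore.
Proof.
move=> cV; rewrite openE => u0 Uu0.
have ct : continuous (fun z : G => m (iv u0) z).
  apply: (@cont_mul _ (fun _ => iv u0) id); move=> z; [exact: cvg_cst | exact: cvg_id].
have N : nbhs u0 ((fun z : G => m (iv u0) z) @^-1` Ucore).
  by apply: ct; rewrite /= mulV; exact: Ucore_nbhs.
apply: filterS N => z /= hz.
suff : Ucore (m u0 (m (iv u0) z)) by rewrite mulA mulgV mul1.
exact: UcoreM.
Qed.

Lemma Ucore_ons : clopen V -> open_normal_subgroup Ucore.
Proof.
move=> cV; split.
- exact: Ucore_open.
- exact: Ucore1.
- exact: UcoreM.
- exact: UcoreV.
- move=> x u; exact: UcoreJ.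
Qed.

End Grp.
Definition pG (G : profinite_group) : ptopologicalType :=
  HB.pack (pg_car G) (isPointed.Build (pg_car G) (pg_one G)).
Lemma fin_cover (G : profinite_group) (f : G -> set G) :
  (forall i, open (f i)) -> (forall z, exists i, f i z) ->
  exists s : seq G, forall z, exists2 i, i \in s & f i z.
Proof.
move=> hof cov.
have : @compact (pG G) [set: pG G] by exact: pg_compact.
rewrite compact_cover => /(_ (pG G) [set: pG G] f) [].
- by move=> i _; exact: hof.
- by move=> z _; have [i fi] := cov z; exists i.
move=> D' _ H; exists (finmap.enum_fset D') => z.
by have [i Di fi] := H z I; exists i.
Qed.

Section Quot.
Variable G : profinite_group.
Local Notation m := (@pg_mul G).
Local Notation iv := (@pg_inv G).
Local Notation e := (@pg_one G).
Variable U : set G.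
Hypothesis hU : open_normal_subgroup U.

Let oU : open U. Proof. by case: hU. Qed.
Let U1 : U e. Proof. by case: hU. Qed.
Let UM x y : U x -> U y -> U (m x y). Proof. by case: hU => _ _ h _ _; exact: h. Qed.
Let UV x : U x -> U (iv x). Proof. by case: hU => _ _ _ h _; exact: h. Qed.
Let UJ x u : U u -> U (m (m x u) (iv x)). Proof. by case: hU => _ _ _ _ h; exact: h. Qed.

Definition cosg (w : G) : set G := [set z | U (m (iv w) z)].

Lemma cos_eq a b : U (m (iv a) b) -> cosg a = cosg b.
Proof.
move=> hab; apply/seteqP; split => z; rewrite /cosg /= => hz.
  have -> : m (iv b) z = m (iv (m (iv a) b)) (m (iv a) z).
    by rewrite invM invK !mulA mulKV.
  by apply: UM => //; exact: UV.
have -> : m (iv a) z = m (m (iv a) b) (m (iv b) z).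
  by rewrite !mulA mulKV.
exact: UM.
Qed.

Lemma cos_eqP a b : cosg a = cosg b -> U (m (iv a) b).
Proof.
move=> h; have : cosg b b by rewrite /cosg /= mulV.
by rewrite -h.
Qed.

Lemma cos_open w : open (cosg w).
Proof.
apply: (@open_comp _ _ (fun z => m (iv w) z) U) => // z _.
apply: (@cont_mul _ _ (fun _ => iv w) id); move=> t; [exact: cvg_cst | exact: cvg_id].
Qed.

Definition reps : seq G :=
  projT1 (cid (@fin_cover G cosg cos_open (fun z => ex_intro (fun i => cosg i z) z
     (eq_ind_r U U1 (mulV z))))).
Lemma repsP z : exists2 i, i \in reps & cosg i z.
Proof. rewrite /reps; case: cid => s hs /=; exact: hs. Qed.

Definition cs : seq (set G) := undup [seq cosg w | w <- reps].

Lemma cs_mem w : cosg w \in cs.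
Proof.
have [i ir fi] := repsP w; rewrite mem_undup; apply/mapP; exists i => //.
exact/esym/cos_eq.
Qed.

Lemma cs_inv C : C \in cs -> exists w, C = cosg w.
Proof. by rewrite mem_undup => /mapP [w _ ->]; exists w. Qed.

Definition X := seq_sub cs.
Definition x0 : X := SeqSub (cs_mem e).

Definition rmul (S : set G) (x : G) : set G := [set z | S (m z (iv x))].

Lemma rmul_cos w x : rmul (cosg w) x = cosg (m w x).
Proof.
apply/seteqP; split => z; rewrite /rmul /cosg /= => hz.
  have := UJ (iv x) hz; rewrite invK invM !mulA mulVK //.
by have := UJ x hz; rewrite invM !mulA mulgV mul1.
Qed.

Lemma rmul_cs (C : X) x : rmul (val C) x \in cs.
Proof. by have [w ->] := cs_inv (valP C); rewrite rmul_cos cs_mem. Qed.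

Definition act x (C : X) : X := insubd x0 (rmul (val C) x).

Lemma act_val x C : val (act x C) = rmul (val C) x.
Proof. exact: (insubdK x0 (rmul_cs C x)). Qed.

Lemma rmulK S x : rmul (rmul S x) (iv x) = S.
Proof. by apply/seteqP; split => z; rewrite /rmul /= invK mulKV. Qed.

Lemma rmulM S x y : rmul S (m x y) = rmul (rmul S x) y.
Proof. by apply/seteqP; split => z; rewrite /rmul /= invM mulA. Qed.

Lemma act_K x : cancel (act x) (act (iv x)).
Proof. by move=> C; apply: val_inj; rewrite !act_val rmulK. Qed.

Definition sig x : {perm X} := perm (can_inj (act_K x)).

Lemma sigE x C : sig x C = act x C.
Proof. by rewrite permE. Qed.

Lemma sigM x y : sig (m x y) = (sig x * sig y)%g.
Proof.
apply/permP => C; rewrite permM !sigE; apply: val_inj.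
by rewrite !act_val rmulM.
Qed.

Lemma sig1P x : sig x = 1%g <-> U x.
Proof.
split => [h|Ux].
  have : val (sig x x0) = val x0 by rewrite h perm1.
  rewrite sigE act_val /= rmul_cos => /esym /cos_eqP.
  by rewrite inv1 !mul1.
apply/permP => C; rewrite perm1 sigE; apply: val_inj; rewrite act_val.
have [w ->] := cs_inv (valP C); rewrite rmul_cos.
by apply/esym/cos_eq; rewrite mulKg.
Qed.

Definition Kset : {set {perm X}} := [set s | `[< exists x, sig x = s >]].

Lemma Kgroup : group_set Kset.
Proof.
apply/group_setP; split.
  by rewrite inE; apply/asboolP; exists e; apply/sig1P.
move=> s t hs ht.
have [x hx] : exists x, sig x = s by move: hs; rewrite inE => /asboolP.
have [y hy] : exists y, sig y = t by move: ht; rewrite inE => /asboolP.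
rewrite inE; apply/asboolP; exists (m x y); by rewrite sigM hx hy.
Qed.

Definition KG : {group {perm X}} := Group Kgroup.

Lemma sig_in x : sig x \in KG.
Proof. by rewrite inE; apply/asboolP; exists x. Qed.

Definition piq (x : G) : [subg KG] := subg KG (sig x).

Lemma piq_quot : quotient_map U piq.
Proof.
split.
- by move=> x y; rewrite /piq sigM subgM // sig_in.
- move=> q; have := subgP q; rewrite inE => /asboolP [x hx].
  by exists x; rewrite /piq hx sgvalK.
- move=> x; rewrite -sig1P; split => h.
    by have := congr1 sgval h; rewrite /piq subgK ?sig_in.
  by apply: val_inj; rewrite /piq subgK ?sig_in // h.
Qed.

End Quot.

Lemma exists_quot (G : profinite_group) (U : set G) : open_normal_subgroup U ->
  exists (Q : finGroupType) (pi : G -> Q), quotient_map U pi.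
Proof. by move=> hU; exists (subg_of (KG hU)), (piq hU); exact: piq_quot. Qed.
End Aux.

Module AuxM.
Set Implicit Arguments. Unset Strict Implicit. Unset Printing Implicit Defensive.
Local Open Scope classical_set_scope.
Import GroupScope.
Section Mx.
Variable p : nat.
Variable Q : finGroupType.
Variable h : Q.
Local Notation n := #|Q|.
Local Notation F := 'F_p.
Local Notation H := <[h]>%G.
Local Notation L := (lcosets H [set: Q]%SET).
Local Notation c := #|L|.
Local Notation M := (rmul_hm1_mx p h).

Local Open Scope ring_scope.

Definition Emx : 'M[F]_(c, n) :=
  \matrix_(i < c, j < n) ((enum_val j \in (enum_val i : {set Q})) : nat)%:R.

Lemma natb (b : bool) : ((b : nat)%:R : F) = if b then 1 else 0.
Proof. by case: b. Qed.

Lemma sum_shift (f : Q -> F) (y : Q) :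
  \sum_(l < n) f (enum_val l) * ((y == (enum_val l * h)%g) : nat)%:R = f (y * h^-1)%g.
Proof.
rewrite -(big_enum_val (fun x => f x * ((y == (x * h)%g) : nat)%:R)) /=.
rewrite (bigD1 (y * h^-1)%g) //= mulgKV eqxx mulr1 big1 ?addr0 // => x hx.
case: eqP => [hy|]; last by rewrite mulr0.
by move: hx; rewrite hy mulgK eqxx.
Qed.

Lemma sum_diag (f : 'I_n -> F) (j : 'I_n) :
  \sum_(l < n) f l * ((l == j) : nat)%:R = f j.
Proof.
rewrite (bigD1 j) //= eqxx mulr1 big1 ?addr0 // => l /negbTE ->; by rewrite mulr0.
Qed.

Lemma coset_shift (C : {set Q}) (x : Q) : C \in L ->
  ((x * h^-1)%g \in C) = (x \in C).
Proof.
case/lcosetsP => y _ ->; rewrite !mem_lcoset mulgA groupMr // groupV cycle_id //.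
Qed.

Lemma EM0 : Emx *m M = 0.
Proof.
apply/matrixP => i j; rewrite !mxE.
under eq_bigr do rewrite !mxE mulrBr.
rewrite sumrB.
rewrite (sum_shift (fun x => ((x \in (enum_val i : {set Q})) : nat)%:R)).
rewrite (sum_diag (fun l => ((enum_val l \in (enum_val i : {set Q})) : nat)%:R)).
by rewrite coset_shift ?enum_valP // subrr.
Qed.

Lemma sum_shift' (g : 'I_n -> F) (y : Q) :
  \sum_(l < n) g l * ((y == (enum_val l * h)%g) : nat)%:R = g (enum_rank (y * h^-1)%g).
Proof.
rewrite -(sum_shift (fun x => g (enum_rank x))); apply: eq_bigr => l _.
by rewrite enum_valK.
Qed.

Lemma in_cosetL (C : {set Q}) x : C \in L -> x \in C -> C = (x *: H)%g.
Proof. by case/lcosetsP => y _ -> /lcoset_eqP ->. Qed.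

Lemma HL x : (x *: H)%g \in L.
Proof. by rewrite mem_lcosets mulGSid ?finset.subsetT ?finset.in_setT. Qed.

Lemma kerE : (kermx M <= Emx)%MS.
Proof.
apply/row_subP => i; set u := row i (kermx M).
have uM : u *m M = 0 by apply/eqP; rewrite -sub_kermx row_sub.
have uK : (u <= kermx M)%MS by exact: row_sub.
clearbody u.
pose f x := u 0 (enum_rank x).
have hf x : f (x * h^-1)%g = f x.
  have := congr1 (fun A : 'rV[F]_n => A 0 (enum_rank x)) uM; rewrite !mxE.
  under eq_bigr do rewrite !mxE mulrBr.
  rewrite sumrB sum_shift' sum_diag enum_rankK => /eqP; rewrite subr_eq0 => /eqP.
  by rewrite /f => ->.
have hf' x : f (x * h)%g = f x by rewrite -[in RHS](mulgK h x) hf.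
have hpow k x : f (x * h ^+ k)%g = f x.
  elim: k x => [|k IH] x; first by rewrite expg0 mulg1.
  by rewrite expgSr mulgA hf' IH.
have hcos x y : y \in (x *: H)%g -> f y = f x.
  rewrite mem_lcoset => /cycleP [k hk].
  by rewrite -(hpow k x) -hk mulKVg.
apply/submxP; exists (\row_k f (repr (enum_val k : {set Q}))).
apply/rowP => j; rewrite !mxE.
set x := enum_val j.
pose k0 := enum_rank_in (HL x) (x *: H)%g.
rewrite (bigD1 k0) //= big1 ?addr0.
  rewrite !mxE enum_rankK_in ?HL // lcoset_refl mulr1.
  have -> : u 0 j = f x by rewrite /f /x enum_valK.
  by symmetry; apply: hcos; apply: mem_repr (lcoset_refl _ _).
move=> k hk; rewrite !mxE.
rewrite natb; case: ifP => [hx|_]; last by rewrite mulr0.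
have e1 : enum_val k = (x *: H)%g by apply: in_cosetL (enum_valP k) hx.
by move: hk; rewrite -(enum_valK_in (HL x) k) e1 eqxx.
Qed.

Definition Smx : 'M[F]_(n, c) :=
  \matrix_(j < n, k < c) ((enum_val j == repr (enum_val k : {set Q})) : nat)%:R.

Lemma ES1 : Emx *m Smx = 1%:M.
Proof.
apply/matrixP => k k'; rewrite !mxE.
under eq_bigr do rewrite !mxE.
rewrite -(big_enum_val (fun x => ((x \in (enum_val k : {set Q})) : nat)%:R *
   ((x == repr (enum_val k' : {set Q})) : nat)%:R)) /=.
rewrite (bigD1 (repr (enum_val k' : {set Q}))) //= eqxx mulr1 big1 ?addr0; last first.
  by move=> x /negbTE ->; rewrite mulr0.
have [y _ ey] := lcosetsP (enum_valP k').
have rk' : repr (enum_val k' : {set Q}) \in (enum_val k' : {set Q}).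
  by rewrite ey; apply: mem_repr (lcoset_refl _ _).
case: (eqVneq k k') => [->|nk]; rewrite natb; case: ifP => // hr.
  by case: (negP (negbT hr) rk').
case/eqP: nk; apply: enum_val_inj.
rewrite (in_cosetL (enum_valP k) hr); symmetry; exact: in_cosetL (enum_valP k') rk'.
Qed.

Lemma rankE : \rank Emx = c.
Proof.
apply/eqP; rewrite eqn_leq rank_leq_row /=.
by rewrite -{1}(mxrank1 F c) -ES1 mxrankM_maxl.
Qed.

Lemma dim_quot_index : dim_quot_ideal p h = #|[set: Q]%SET : H|%g.
Proof.
rewrite /dim_quot_ideal -mxrank_ker -card_lcosets -rankE.
apply/eqP; rewrite eqn_leq (mxrankS kerE) mxrankS //.
by rewrite sub_kermx EM0.
Qed.
End Mx.
End AuxM.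
Import Aux AuxM.

Module AuxF.
Set Implicit Arguments. Unset Strict Implicit. Unset Printing Implicit Defensive.
Local Open Scope classical_set_scope.
Local Open Scope ring_scope.

Section Fin.
Variable R : realType.
Variable p : nat.
Variable G : profinite_group.
Variable g : G.
Local Notation m := (@pg_mul G).
Local Notation e := (@pg_one G).

Lemma quot_val (Q : finGroupType) (h : Q) :
  ((dim_quot_ideal p h)%:R / (#|Q|)%:R : R) = (#[h]%g%:R)^-1.
Proof.
rewrite dim_quot_index.
have := Lagrange (finset.subsetT <[h]>%G); rewrite cardsT => <-.
rewrite natrM invfM mulrCA divff ?mulr1 //.
by rewrite pnatr_eq0 -lt0n indexg_gt0.
Qed.

Lemma pi_exp (U : set G) (Q : finGroupType) (pi : G -> Q) :
  U e -> quotient_map U pi -> forall n, pi (pg_exp g n) = (pi g ^+ n)%g.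
Proof.
move=> U1 [hm _ hk] n; elim: n => [|n IH] /=.
  by rewrite expg0; apply/hk.
by rewrite /pg_exp /= hm -/(pg_exp g n) IH expgS.
Qed.

End Fin.
End AuxF.
Import AuxF.

Theorem lemma4p6 (R : realType) (p : nat) (G : profinite_group) (g : G) (k : nat) :
  prime p -> pro_p G p -> countably_based G -> pg_order_is g (p ^ k) ->
  dim_completed R p g = ((p ^ k)%:R)^-1%R.
Proof.
move=> pp _ _ [k0 [gk ordg]].
have key : forall (U : set G) (Q : finGroupType) (pi : G -> Q),
    open_normal_subgroup U -> quotient_map U pi -> (#[pi g]%g %| p ^ k)%N.
  move=> U Q pi hU qm; rewrite order_dvdn -(pi_exp _ _ qm); last by case: hU.
  rewrite gk; apply/eqP; case: qm => _ _ hk; apply/hk; by case: hU.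
rewrite /dim_completed.
set S := (X in inf X).
have lb : forall r, S r -> (((p ^ k)%:R)^-1 <= r)%R.
  move=> r [U [hU [Q [pi [qm ->]]]]]; rewrite quot_val.
  have hd := key _ _ _ hU qm.
  have o0 : (0 < #[pi g]%g)%N := order_gt0 _.
  have le1 : (#[pi g]%g <= p ^ k)%N by apply: dvdn_leq hd; rewrite expn_gt0 prime_gt0.
  rewrite lef_pV2; first by move: le1; rewrite -(ler_nat R).
    by rewrite posrE ltr0n.
  by rewrite posrE ltr0n.
have inS : S (((p ^ k)%:R)^-1)%R.
  have [U1 [hV1 hnV1]] : exists U0 : set G, open_normal_subgroup U0 /\
      ((0 < k)%N -> ~ U0 (pg_exp g (p ^ k.-1))).
    case: (posnP k) => [k00|kpos].
      exists setT; split; last by rewrite k00.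
      split => //; exact: openT.
    set h := pg_exp g (p ^ k.-1).
    have hne : pg_one G <> h.
      move=> eh; apply: (ordg (p ^ k.-1)); last exact: (esym eh).
      by rewrite expn_gt0 prime_gt0 //= ltn_exp2l ?prime_gt1 // ltn_predL.
    have [V [cV Ve nVh]] := zero_dim (@pg_hausdorff G) (@pg_compact G) (@pg_tdisc G) hne.
    exists (Ucore V); split; first exact: Ucore_ons.
    move=> _ hu; apply: nVh; exact: (proj2 (Ucore_sub hu) Ve).
  have [Q1 [pi1 qm1]] := exists_quot hV1.
  exists U1; split => //; exists Q1, pi1; split => //; rewrite quot_val.
  have hd1 := key _ _ _ hV1 qm1.
  case/(dvdn_pfactor _ _ pp): hd1 => j jk ej; rewrite ej.
  case: (ltnP j k) => [jlt|jge]; last by have -> : j = k by apply/eqP; rewrite eqn_leq jk jge.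
  exfalso; apply: hnV1; first by apply: leq_ltn_trans jlt.
  case: qm1 => hm hs hk; apply/hk.
  rewrite (pi_exp _ _ (And3 hm hs hk)); last by case: hV1.
  apply/eqP; rewrite -order_dvdn ej; apply: dvdn_exp2l.
  by rewrite -ltnS prednK // (leq_ltn_trans _ jlt).
apply: Order.POrderTheory.le_anti; apply/andP; split.
  apply: (ge_inf _ inS); exists (((p ^ k)%:R)^-1)%R; exact: lb.
by apply: lb_le_inf; [exists (((p ^ k)%:R)^-1)%R | exact: lb].
Qed.
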